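(* Let $k\ge1$. Let $(G_1,\dots,G_k)$ be distributed according to $\gamma_k$, $U$ uniform on $\{0,1,\dots,k\}$, and $\tau$ a uniform random permutation of $\{0,1,\dots,k\}$, all independent. Let $(I_1,\dots,I_{k+1})\sim\mu_{k+1}$ and $U'$ uniform on $\{1,\dots,k+1\}$ independent of it, and set $J=(I_i-I_{U'})_{1\le i\le k+1}$. Then $(\bar G_{\tau(i)}-\bar G_U)_{0\le i\le k}\overset{(d)}{=}J$, where $\bar G_0=0$ and $\bar G_i=G_1+\dots+G_i$.
   Context: Let $B_1,B_2,\dots$ be i.i.d. two-sided standard Brownian motions and $I^{(n)}=B_n\circ\cdots\circ B_1$. It is known that for any $m\ge1$ and distinct nonzero reals $t_1,\dots,t_m$, $(I^{(n)}(t_1),\dots,I^{(n)}(t_m))$ converges in distribution to a law $\mu_m$ independent of the $t_i$'s (hence exchangeable), and that for $(I_1,\dots,I_m)\sim\mu_m$, $(I_2-I_1,\dots,I_m-I_1)\sim\mu_{m-1}$. For a sequence $\ell_0,\dots,\ell_k$ with increasing rearrangement $\hat\ell_0\le\dots\le\hat\ell_k$, its gaps sequence is $(\hat\ell_i-\hat\ell_{i-1})_{1\le i\le k}$. $\gamma_k$ is the law of the gaps sequence of a $\mu_{k+1}$-distributed vector. *)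

(* Defs.v *)
From HB Require Import structures.
From mathcomp Require Import all_boot all_order all_algebra.
From mathcomp Require Import all_classical all_reals all_analysis.
Set Implicit Arguments.
Unset Strict Implicit.
Unset Printing Implicit Defensive.
Import Order.TTheory GRing.Theory Num.Theory.
Import numFieldNormedType.Exports.
Local Open Scope classical_set_scope.
Local Open Scope ring_scope.

Definition Exp {d} {T : measurableType d} {R : realType} (P : probability T R)
  (X : T -> R) : R := \int[P]_w X w.

Definition bcont {R : realType} {m : nat} (f : 'rV[R]_m -> R) : Prop :=
  continuous f /\ exists M : R, forall x, `|f x| <= M.
Definition bcont1 {R : realType} (f : R -> R) : Prop :=
  continuous f /\ exists M : R, forall x, `|f x| <= M.

Definition rvec {d} {T : measurableType d} {R : realType} {m : nat}
  (X : T -> 'rV[R]_m) : Prop :=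
  forall i : 'I_m, measurable_fun setT (fun w => X w ord0 i).

Definition rfin {d} {T : measurableType d} {A : finType} (X : T -> A) : Prop :=
  forall a : A, measurable [set w | X w = a].

(* B : nat -> R -> T -> R is a sequence (B 0 = B_1, B 1 = B_2, ...) of
   i.i.d. two-sided standard Brownian motions on (T, P):
   - measurable, B_n(0) = 0, continuous paths;
   - for t_0 < t_1 < ... < t_j the increments B(t_{i+1}) - B(t_i) are
     independent with laws N(0, t_{i+1} - t_i) (test-function form);
   - the processes B_0, B_1, ... are mutually independent (finite-dimensional,
     test-function form). *)
Definition iid_two_sided_BM {d} {T : measurableType d} {R : realType}
  (P : probability T R) (B : nat -> R -> T -> R) : Prop :=
  [/\ (forall n t, measurable_fun setT (B n t)),
      (forall n w, B n 0 w = 0),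
      (forall n w, continuous (fun t => B n t w)),
      (forall n j (t : 'I_j.+1 -> R),
          (forall i : 'I_j, t (widen_ord (leqnSn j) i) < t (lift ord0 i)) ->
          forall g : 'I_j -> R -> R, (forall i, bcont1 (g i)) ->
          Exp P (fun w => \prod_(i < j)
              g i (B n (t (lift ord0 i)) w - B n (t (widen_ord (leqnSn j) i)) w))
          = \prod_(i < j) \int[normal_prob 0
                 (Num.sqrt (t (lift ord0 i) - t (widen_ord (leqnSn j) i)))]_x g i x)
    & (forall (N j : nat) (t : 'I_j -> R) (g : 'I_N -> 'rV[R]_j -> R),
          (forall n, bcont (g n)) ->
          Exp P (fun w => \prod_(n < N) g n (\row_i B n (t i) w))
          = \prod_(n < N) Exp P (fun w => g n (\row_i B n (t i) w)))].

Fixpoint iterB {T : Type} {R : realType} (B : nat -> R -> T -> R) (n : nat)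
  (t : R) (w : T) : R :=
  match n with
  | 0 => t
  | n'.+1 => B n' (iterB B n' t w) w
  end.

(* The random vector I on (T2,P2) has law mu_m: for all distinct nonzero
   t_1..t_m, (I^(n)(t_1),...,I^(n)(t_m)) converges in distribution to I. *)
Definition has_law_mu {d0 d2} {T0 : measurableType d0} {T2 : measurableType d2}
  {R : realType} {m : nat} (P0 : probability T0 R) (B : nat -> R -> T0 -> R)
  (P2 : probability T2 R) (I : T2 -> 'rV[R]_m) : Prop :=
  forall t : 'rV[R]_m,
    injective (fun i : 'I_m => t ord0 i) -> (forall i, t ord0 i != 0) ->
    forall f : 'rV[R]_m -> R, bcont f ->
      (fun n : nat => Exp P0 (fun w => f (\row_i iterB B n (t ord0 i) w)))
        @ \oo --> Exp P2 (fun w => f (I w)).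

Definition gaps {R : realType} {m : nat} (l : 'rV[R]_m.+1) : 'rV[R]_m :=
  let s := sort <=%R [seq l ord0 i | i <- enum 'I_m.+1] in
  \row_(i < m) (nth 0 s i.+1 - nth 0 s i).

(* partial sums: Gbar g i = g_1 + ... + g_i  (Gbar g 0 = 0), g indexed from 0 *)
Definition Gbar {R : realType} {k : nat} (g : 'rV[R]_k) (i : 'I_k.+1) : R :=
  \sum_(j < k | (j < i)%N) g ord0 j.

(* Main.v *)
Require Import Defs.
From HB Require Import structures.
From mathcomp Require Import all_boot all_order all_algebra.
From mathcomp Require Import all_classical all_reals all_analysis.
From mathcomp Require Import perm.
From mathcomp Require Import measurable_realfun.
Import Order.TTheory GRing.Theory Num.Theory.
Import numFieldNormedType.Exports.
Local Open Scope classical_set_scope.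
Local Open Scope ring_scope.


Section H.
Variable R : realType.

Lemma row_cont (m p : nat) (L : 'rV[R]_m -> 'rV[R]_p) :
  (forall j, continuous (fun x => L x ord0 j)) -> continuous L.
Proof.
move=> cL x A [P HP HA].
have H : \forall y \near x, forall j, P ord0 j (L y ord0 j).
  apply: (@filter_forall _ _ (fun j y => P ord0 j (L y ord0 j)) (nbhs x) _) => j; exact: (cL j x _ (HP ord0 j)).
suff : nbhs x (L @^-1` A) by []. apply: (@filterS _ (nbhs x) _ _ _ _ H) => y Hy; apply: (HA (L y)) => i j.
by rewrite (ord1 i); exact: Hy.
Qed.

Lemma bcont_comp m p (f : 'rV[R]_p -> R) (L : 'rV[R]_m -> 'rV[R]_p) :
  bcont f -> (forall j, continuous (fun x => L x ord0 j)) -> bcont (f \o L).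
Proof.
move=> [cf [M HM]] cL; split; last by exists M => x; exact: HM.
move=> x; apply: continuous_comp; first exact: row_cont.
exact: cf.
Qed.


Lemma meas_fin_cap d (T : measurableType d) (I : finType) (Q : I -> set T) :
  (forall i, measurable (Q i)) -> measurable [set w | forall i, Q i w].
Proof.
move=> mQ.
have -> : [set w | forall i, Q i w] = ~` \bigcup_i ~` Q i.
  apply/seteqP; split => w /=.
    by move=> H [i _ /=]; apply; exact: H.
  by move=> H i; apply: contrapT => Hn; apply: H; exists i.
apply: measurableC; apply: countable_bigcupT_measurable; first exact: countableP.
by move=> i; apply: measurableC.
Qed.

Lemma meas_cont d (T : measurableType d) m (X : T -> 'rV[R]_m)
  (h : 'rV[R]_m -> R) :
  rvec X -> continuous h -> measurable_fun setT (h \o X).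
Proof.
move=> mX ch; apply: (measurability _ (measurable_realfun.RGenOpens.measurableE R)).
move=> _ [_ [a [b ->]] <-].
set O := h @^-1` `]a, b[%classic.
have oO : open O by move/continuousP : ch; apply; exact: itv_open.
pose box (q : 'rV[rat]_m * 'rV[rat]_m) :=
  [set y : 'rV[R]_m | forall i, ratr (q.1 ord0 i) < y ord0 i < ratr (q.2 ord0 i)].
pose F q := [set w | box q `<=` O /\ box q (X w)].
have -> : setT `&` (h \o X) @^-1` `]a, b[%classic = \bigcup_q F q.
  apply/seteqP; split => w /=; last first.
    by move=> [q _ [sq bq]]; split => //; exact: sq.
  move=> [_ Ow].
  have := oO _ Ow => /= [[P HP HA]].
  have Hj : forall j, exists q : rat * rat,
      ratr q.1 < X w ord0 j < ratr q.2 /\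
      (forall y, ratr q.1 < y < ratr q.2 -> P ord0 j y).
    move=> j; have /nbhs_ballP [e e0 He] := HP ord0 j.
    move: He; rewrite ball_itv => He.
    have l1 : X w ord0 j - e < X w ord0 j by rewrite ltrBlDr ltrDl.
    have l2 : X w ord0 j < X w ord0 j + e by rewrite ltrDl.
    have [q1 Hq1] := rat_in_itvoo l1.
    have [q2 Hq2] := rat_in_itvoo l2.
    move: Hq1 Hq2; rewrite !in_itv /= => /andP[H11 H12] /andP[H21 H22].
    exists (q1, q2) => /=; split; first by rewrite H12 H21.
    move=> y /andP[y1 y2]; apply: He; rewrite /= in_itv /=.
    by rewrite (lt_trans H11 y1) (lt_trans y2 H22).
  have [fq Hfq] := choice Hj.
  exists (\row_j (fq j).1, \row_j (fq j).2) => //; split.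
    move=> y /= Hy; apply: (HA y) => i j; rewrite (ord1 i).
    by apply: (proj2 (Hfq j)); have := Hy j; rewrite !mxE.
  by move=> j /=; rewrite !mxE; exact: (proj1 (Hfq j)).
apply: countable_bigcupT_measurable; first exact: countableP.
move=> q; have [sq|nsq] := pselect (box q `<=` O); last first.
  have -> : F q = set0 by apply/seteqP; split => w // [].
  exact: measurable0.
have -> : F q = [set w | forall i, (fun i w => ratr (q.1 ord0 i) < X w ord0 i < ratr (q.2 ord0 i)) i w].
  by apply/seteqP; split => w /=; [move=> [] |split].
apply: meas_fin_cap => i.
have := mX i measurableT _ (measurable_itv `](ratr (q.1 ord0 i)), (ratr (q.2 ord0 i))[).
rewrite setTI; congr measurable; apply/seteqP; split => w /=; by rewrite in_itv.
Qed.


Definition bm {d} {T : measurableType d} (F : T -> R) :=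
  measurable_fun setT F /\ exists M, forall w, `|F w| <= M.

Lemma bm_integrable d (T : measurableType d) (P : probability T R) (F : T -> R) :
  bm F -> P.-integrable setT (EFin \o F).
Proof.
move=> [mF [M HM]]; apply: measurable_bounded_integrable => //.
  by apply: (le_lt_trans (probability_le1 P measurableT)); rewrite ltry.
rewrite /bounded_near; near=> M' => x _ /=; apply: le_trans (HM x) _.
near: M'. by apply: nbhs_pinfty_ge; exact: num_real.
Unshelve. all: by end_near.
Qed.

Lemma bm_add d (T : measurableType d) (F1 F2 : T -> R) :
  bm F1 -> bm F2 -> bm (fun w => F1 w + F2 w).
Proof.
move=> [m1 [M1 H1]] [m2 [M2 H2]]; split; first exact: measurable_funD.
by exists (M1 + M2) => w; apply: le_trans (ler_normD _ _) _; apply: lerD.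
Qed.

Lemma bm_mul d (T : measurableType d) (F1 F2 : T -> R) :
  bm F1 -> bm F2 -> bm (fun w => F1 w * F2 w).
Proof.
move=> [m1 [M1 H1]] [m2 [M2 H2]]; split; first exact: measurable_funM.
exists (`|M1| * `|M2|) => w; rewrite normrM; apply: ler_pM => //.
  exact: le_trans (H1 w) (ler_norm _).
exact: le_trans (H2 w) (ler_norm _).
Qed.

Lemma bm_cst d (T : measurableType d) (c : R) : bm (fun _ : T => c).
Proof. by split; [exact: measurable_cst | exists `|c|]. Qed.

Lemma bm_sum d (T : measurableType d) (I : Type) (s : seq I) (F : I -> T -> R) :
  (forall i, bm (F i)) -> bm (fun w => \sum_(i <- s) F i w).
Proof.
move=> HF; elim: s => [|i s IH].
  by under eq_fun do rewrite big_nil; exact: bm_cst.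
by under eq_fun do rewrite big_cons; exact: bm_add.
Qed.

Lemma Exp_add d (T : measurableType d) (P : probability T R) (F1 F2 : T -> R) :
  bm F1 -> bm F2 -> Exp P (fun w => F1 w + F2 w) = Exp P F1 + Exp P F2.
Proof.
by move=> b1 b2; rewrite /Exp RintegralD //; exact: bm_integrable.
Qed.

Lemma Exp_sum d (T : measurableType d) (P : probability T R) (I : Type)
  (s : seq I) (F : I -> T -> R) :
  (forall i, bm (F i)) ->
  Exp P (fun w => \sum_(i <- s) F i w) = \sum_(i <- s) Exp P (F i).
Proof.
move=> HF; elim: s => [|i s IH].
  under eq_fun do rewrite big_nil.
  by rewrite big_nil /Exp Rintegral_cst // mul0r.
under eq_fun do rewrite big_cons.
by rewrite big_cons Exp_add ?IH //; exact: bm_sum.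
Qed.

Lemma bm_indic d (T : measurableType d) (A : finType) (X : T -> A) (a : A) :
  rfin X -> bm (fun w => (X w == a)%:R : R).
Proof.
move=> mX; split; last first.
  by exists 1 => w; case: (X w == a); rewrite ?normr1 ?normr0.
have -> : (fun w => (X w == a)%:R : R) = \1_[set w | X w = a].
  by apply/funext => w; rewrite indicE; case: eqP => H;
    [rewrite mem_set | rewrite memNset].

exact: measurable_indic.
Qed.

Lemma Exp_indic d (T : measurableType d) (P : probability T R) (A : finType)
  (X : T -> A) (a : A) :
  rfin X -> Exp P (fun w => (X w == a)%:R) = fine (P [set w | X w = a]).
Proof.
move=> mX.
have -> : (fun w => (X w == a)%:R : R) = \1_[set w | X w = a].
  by apply/funext => w; rewrite indicE; case: eqP => H;
    [rewrite mem_set | rewrite memNset].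
rewrite /Exp /Rintegral integral_indic // ?setIT //.
Qed.

End H.
Arguments bm {R d T} F.


Section C.
Variable R : realType.

Lemma cont_sum m (I : Type) (s : seq I) (F : I -> 'rV[R]_m -> R) :
  (forall i, continuous (F i)) -> continuous (fun x => \sum_(i <- s) F i x).
Proof.
move=> HF; elim: s => [|i s IH].
  by under eq_fun do rewrite big_nil; exact: cst_continuous.
have -> : (fun x => \sum_(j <- i :: s) F j x) = F i + (fun x => \sum_(j <- s) F j x).
  by apply/funext => x; rewrite big_cons.
by move=> x; apply: continuousD; [exact: HF | exact: IH].
Qed.

Lemma cont_coordB m (a b : 'I_m) : continuous (fun x : 'rV[R]_m => x ord0 a - x ord0 b).
Proof.
move=> x; apply: (@continuousB _ _ _ (fun y : 'rV[R]_m => y ord0 a) (fun y => y ord0 b));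
  exact: coord_continuous.
Qed.

Lemma cont_Gbar k (j : 'I_k.+1) : continuous (fun g : 'rV[R]_k => Gbar g j).
Proof.
have -> : (fun g : 'rV[R]_k => Gbar g j) =
  (fun g => \sum_(l <- index_enum 'I_k) (if (l < j)%N then g ord0 l else 0)).
  by apply: funext => g; rewrite /Gbar; exact: big_mkcond.
apply: cont_sum => l /=; destruct (l < j)%N; [exact: coord_continuous | exact: cst_continuous].
Qed.
Lemma cont_GbarB k (a b : 'I_k.+1) : continuous (fun g : 'rV[R]_k => Gbar g a - Gbar g b).
Proof.
move=> x; apply: (@continuousB _ _ _ (fun g : 'rV[R]_k => Gbar g a) (fun g => Gbar g b));
  exact: cont_Gbar.
Qed.

End C.


Section K.
Variable R : realType.
Variable k : nat.

Definition pr (r : {perm 'I_k.+1}) (x : 'rV[R]_k.+1) : 'rV[R]_k.+1 :=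
  \row_i x ord0 (r i).
Definition sortedp (x : 'rV[R]_k.+1) (r : {perm 'I_k.+1}) : Prop :=
  forall i : 'I_k, x ord0 (r (widen_ord (leqnSn k) i)) <= x ord0 (r (lift ord0 i)).
Definition gapsr (r : {perm 'I_k.+1}) (x : 'rV[R]_k.+1) : 'rV[R]_k :=
  \row_(i < k) (x ord0 (r (lift ord0 i)) - x ord0 (r (widen_ord (leqnSn k) i))).

Lemma nth_map_enum (F : 'I_k.+1 -> R) j (H : (j < k.+1)%N) :
  nth 0 [seq F i | i <- enum 'I_k.+1] j = F (Ordinal H).
Proof.
rewrite (nth_map ord0) ?size_enum_ord //; congr F; apply: val_inj => /=.
exact: nth_enum_ord.
Qed.
Arguments nth_map_enum F {j} H.

Lemma sortedpP (x : 'rV[R]_k.+1) r :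
  sortedp x r <-> sorted <=%R [seq x ord0 (r i) | i <- enum 'I_k.+1].
Proof.
split.
- move=> H; apply/(sortedP 0) => i; rewrite size_map size_enum_ord => Hi.
  rewrite (nth_map_enum (fun j => x ord0 (r j)) (ltnW Hi)) (nth_map_enum _ Hi).
  have Hik : (i < k)%N by [].
  have := H (Ordinal Hik).
  by congr (x _ (r _) <= x _ (r _)); apply: val_inj.
- move=> /(sortedP 0) H i; have := H i.
  rewrite size_map size_enum_ord ltnS ltn_ord => /(_ isT).
  rewrite (nth_map_enum (fun j => x ord0 (r j)) (ltnW (ltn_ord i))).
  rewrite (nth_map_enum (fun j => x ord0 (r j)) (ltn_ord i : (i.+1 < k.+1)%N)).
  by congr (x _ (r _) <= x _ (r _)); apply: val_inj.
Qed.

Lemma perm_map_enum (x : 'rV[R]_k.+1) (r : {perm 'I_k.+1}) :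
  perm_eq [seq x ord0 (r i) | i <- enum 'I_k.+1] [seq x ord0 i | i <- enum 'I_k.+1].
Proof.
rewrite (map_comp (fun i => x ord0 i) r); apply: perm_map.
apply: uniq_perm; first by rewrite map_inj_uniq ?enum_uniq //; exact: perm_inj.
  exact: enum_uniq.
move=> y; rewrite mem_enum; apply/mapP; exists ((r^-1)%g y).
  by rewrite mem_enum.
by rewrite permKV.
Qed.

Lemma sort_eq (x : 'rV[R]_k.+1) r : sortedp x r ->
  sort <=%R [seq x ord0 i | i <- enum 'I_k.+1] = [seq x ord0 (r i) | i <- enum 'I_k.+1].
Proof.
move=> H; apply: le_sorted_eq; first by apply: sort_sorted; exact: le_total.
  exact/sortedpP.
by rewrite perm_sort perm_sym; exact: perm_map_enum.
Qed.

Lemma gaps_sorted (x : 'rV[R]_k.+1) r : sortedp x r -> gaps x = gapsr r x.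
Proof.
move=> H; rewrite /gaps /= (@sort_eq x r H); apply/rowP => i; rewrite !mxE.
rewrite (nth_map_enum (fun j => x ord0 (r j)) (ltn_ord i : (i.+1 < k.+1)%N)).
rewrite (nth_map_enum (fun j => x ord0 (r j)) (ltnW (ltn_ord i))).
by congr (x _ (r _) - x _ (r _)); apply: val_inj.
Qed.

Lemma sortedp_ex (x : 'rV[R]_k.+1) : exists r, sortedp x r.
Proof.
pose t := [tuple x ord0 i | i < k.+1].
have Ht : [seq x ord0 i | i <- enum 'I_k.+1] = t.
  by rewrite -(map_tnth_enum t); apply: eq_map => i; rewrite tnth_mktuple.
have := perm_sort <=%R [seq x ord0 i | i <- enum 'I_k.+1].
move=> Hp.
have : perm_eq (sort <=%R [seq x ord0 i | i <- enum 'I_k.+1]) t.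
  by rewrite Hp Ht.
case/tuple_permP => p Hs; exists p; apply/sortedpP.
have -> : [seq x ord0 (p i) | i <- enum 'I_k.+1] =
          sort <=%R [seq x ord0 i | i <- enum 'I_k.+1].
  rewrite Hs -map_tnth_enum; apply: eq_map => i.
  by rewrite tnth_mktuple tnth_mktuple.
by apply: sort_sorted; exact: le_total.
Qed.

Lemma Gbar_r r (x : 'rV[R]_k.+1) (j : 'I_k.+1) :
  Gbar (gapsr r x) j = x ord0 (r j) - x ord0 (r ord0).
Proof.
pose S l := x ord0 (r (inord l)).
rewrite /Gbar.
transitivity (\sum_(l < k | (l < j)%N) (S l.+1 - S l)).
  apply: eq_bigr => l _; rewrite mxE /S.
  congr (x _ (r _) - x _ (r _)); apply: val_inj => /=.
    by rewrite inordK // ltnS ltn_ord.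
  by rewrite inordK // ltnW // ltnS ltn_ord.
rewrite -(big_ord_widen k (fun l => S l.+1 - S l)) ?(ltn_ord j) //.
have := @telescope_sumr _ 0 j S (leq0n j); rewrite big_mkord => -> ; rewrite /S.
rewrite -[in RHS](inord_val j); congr (x _ (r _) - x _ (r _)); apply: val_inj => /=; rewrite inordK //. exact: ltn_ord j.
Qed.

Lemma A_gaps (f : 'rV[R]_k.+1 -> R) (x : 'rV[R]_k.+1) r u (s : {perm 'I_k.+1}) : sortedp x r ->
  f (\row_i (Gbar (gaps x) (s i) - Gbar (gaps x) u))
  = f (\row_i (x ord0 (r (s i)) - x ord0 (r u))).
Proof.
move=> H; rewrite (@gaps_sorted x r H); congr f; apply/rowP => i; rewrite !mxE !Gbar_r.
by rewrite opprB addrA subrK.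
Qed.

Lemma sum_ident (f : 'rV[R]_k.+1 -> R) (x : 'rV[R]_k.+1) :
  \sum_(u : 'I_k.+1) \sum_(s : {perm 'I_k.+1})
      f (\row_i (Gbar (gaps x) (s i) - Gbar (gaps x) u))
  = \sum_(v : 'I_k.+1) \sum_(r : {perm 'I_k.+1})
      f (\row_i (pr r x ord0 i - pr r x ord0 v)).
Proof.
have [r Hr] := sortedp_ex x.
under eq_bigr do under eq_bigr do rewrite (A_gaps f x r _ _ Hr).
rewrite exchange_big [RHS]exchange_big /=.
rewrite [RHS](reindex_inj (mulIg r)) /=.
apply: eq_bigr => s _; rewrite (reindex_inj (@perm_inj _ s)) /=.
by apply: eq_bigr => v _; congr f; apply/rowP => i; rewrite !mxE !permM.
Qed.

End K.
Arguments sortedp {R k} x r.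
Arguments pr {R k} r x.
Arguments gapsr {R k} r x.


Section M.
Variable R : realType.

Lemma meas_piece d (T : measurableType d) (I : finType) (E : I -> set T)
  (psi : I -> T -> R) (phi : T -> R) :
  (forall i, measurable (E i)) -> (forall w, exists i, E i w) ->
  (forall i w, E i w -> phi w = psi i w) ->
  (forall i, measurable_fun setT (psi i)) -> measurable_fun setT phi.
Proof.
move=> mE cov eq mpsi _ B mB.
have -> : setT `&` phi @^-1` B = \bigcup_i (E i `&` (setT `&` psi i @^-1` B)).
  apply/seteqP; split => w /=.
    move=> [_ Bw]; have [i Ei] := cov w; exists i => //; split => //; split => //.
    by rewrite /preimage /= -(eq i w Ei).
  by move=> [i _ [Ei [_ Bw]]]; split => //; rewrite /preimage /= (eq i w Ei).
apply: countable_bigcupT_measurable; first exact: countableP.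
by move=> i; apply: measurableI => //; exact: mpsi.
Qed.

Lemma bm_comp d (T : measurableType d) m (X : T -> 'rV[R]_m) (h : 'rV[R]_m -> R) :
  rvec X -> bcont h -> bm (fun w => h (X w)).
Proof.
move=> mX [ch [M HM]]; split; last by exists M.
exact: meas_cont.
Qed.

Lemma cont_pr k (f : 'rV[R]_k.+1 -> R) (p : 'I_k.+1 -> 'I_k.+1) (a : 'I_k.+1) :
  continuous f -> continuous (fun y : 'rV[R]_k.+1 => f (\row_i (y ord0 (p i) - y ord0 a))).
Proof.
move=> cf x; apply: continuous_comp; last exact: cf.
apply: (@row_cont R _ _ (fun y : 'rV[R]_k.+1 => \row_i (y ord0 (p i) - y ord0 a))) => j.
by under eq_fun do rewrite mxE; exact: cont_coordB.
Qed.

Lemma bm_gaps d (T : measurableType d) k (X : T -> 'rV[R]_k.+1)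
  (f : 'rV[R]_k.+1 -> R) u (s : {perm 'I_k.+1}) :
  rvec X -> bcont f ->
  bm (fun w => f (\row_i (Gbar (gaps (X w)) (s i) - Gbar (gaps (X w)) u))).
Proof.
move=> mX [cf [M HM]]; split; last by exists M.
apply: (@meas_piece d T {perm 'I_k.+1} (fun r => [set w | sortedp (X w) r])
  (fun r w => f (\row_i (X w ord0 (r (s i)) - X w ord0 (r u))))).
- move=> r; apply: meas_fin_cap => i.
  have mt : measurable [set true] by [].
  have := @measurable_fun_ler _ _ _ setT
    (fun w => X w ord0 (r (widen_ord (leqnSn k) i)))
    (fun w => X w ord0 (r (lift ord0 i))) (mX _) (mX _) measurableT [set true] mt.
  by rewrite setTI; congr measurable; apply/seteqP; split => w.
- move=> w; exact: sortedp_ex.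
- move=> r w /= Hr; exact: A_gaps.
- move=> r; exact: (@meas_cont R _ _ _ X _ mX (@cont_pr k f (fun i => r (s i)) (r u) cf)).
Qed.

Lemma sum_ind (I : finType) (F : I -> R) (a : I) :
  \sum_i F i * (a == i)%:R = F a.
Proof.
rewrite (bigD1 a) //= eqxx mulr1 big1 ?addr0 // => i /negbTE.
by rewrite eq_sym => ->; rewrite mulr0.
Qed.



Lemma exch d0 d2 (T0 : measurableType d0) (T2 : measurableType d2)
  (P0 : probability T0 R) (B : nat -> R -> T0 -> R) (P2 : probability T2 R)
  m (I : T2 -> 'rV[R]_m) :
  has_law_mu P0 B P2 I -> forall (h : 'rV[R]_m -> R) (r : {perm 'I_m}),
  bcont h -> Exp P2 (fun w => h (I w)) = Exp P2 (fun w => h (\row_i I w ord0 (r i))).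
Proof.
move=> HI h r hb.
pose t : 'rV[R]_m := \row_i (i.+1)%:R.
pose t' : 'rV[R]_m := \row_i ((r i).+1)%:R.
have inj_t : injective (fun i => t ord0 i).
  move=> i j /=; rewrite !mxE => /eqP; rewrite eqr_nat eqSS => /eqP; exact: val_inj.
have inj_t' : injective (fun i => t' ord0 i).
  move=> i j /=; rewrite !mxE => /eqP; rewrite eqr_nat eqSS => /eqP H.
  by apply: (@perm_inj _ r); apply: val_inj.
have nz_t i : t ord0 i != 0 by rewrite mxE pnatr_eq0.
have nz_t' i : t' ord0 i != 0 by rewrite mxE pnatr_eq0.
have bc : bcont (fun x : 'rV[R]_m => h (\row_i x ord0 (r i))).
  apply: (@bcont_comp R _ _ h (fun x : 'rV[R]_m => \row_i x ord0 (r i))) => // j.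
  by under eq_fun do rewrite mxE; exact: coord_continuous.
have H1 := HI t' inj_t' nz_t' h hb.
have H2 := HI t inj_t nz_t _ bc.
have E : (fun n => Exp P0 (fun w => h (\row_i iterB B n (t' ord0 i) w))) =
   (fun n => Exp P0 (fun w => (fun x : 'rV[R]_m => h (\row_i x ord0 (r i)))
                                (\row_i iterB B n (t ord0 i) w))).
  apply/funext => n; congr Exp; apply/funext => w /=; congr h.
  by apply/rowP => i; rewrite !mxE.
rewrite E in H1.
exact: (cvg_unique _ H1 H2).
Qed.

End M.


Theorem proposition4 (R : realType) (k : nat) (k_ge1 : (0 < k)%N)
  (d0 d1 d2 : measure_display)
  (T0 : measurableType d0) (P0 : probability T0 R) (B : nat -> R -> T0 -> R)
  (T1 : measurableType d1) (P1 : probability T1 R)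
  (G : T1 -> 'rV[R]_k) (U : T1 -> 'I_k.+1) (tau : T1 -> {perm 'I_k.+1})
  (T2 : measurableType d2) (P2 : probability T2 R)
  (I : T2 -> 'rV[R]_k.+1) (U' : T2 -> 'I_k.+1) :
  iid_two_sided_BM P0 B ->
  (* (I_1,...,I_{k+1}) ~ mu_{k+1} *)
  rvec I -> has_law_mu P0 B P2 I ->
  (* U' uniform on {1,...,k+1}, independent of I *)
  rfin U' -> (forall u, P2 [set w | U' w = u] = ((k.+1)%:R^-1)%:E) ->
  (forall (f : 'rV[R]_k.+1 -> R) (g : 'I_k.+1 -> R), bcont f ->
     Exp P2 (fun w => f (I w) * g (U' w))
     = Exp P2 (fun w => f (I w)) * Exp P2 (fun w => g (U' w))) ->
  (* (G_1,...,G_k) ~ gamma_k *)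
  rvec G ->
  (forall f : 'rV[R]_k -> R, bcont f ->
     Exp P1 (fun w => f (G w)) = Exp P2 (fun w => f (gaps (I w)))) ->
  (* U uniform on {0,...,k}, tau uniform permutation of {0,...,k} *)
  rfin U -> (forall u, P1 [set w | U w = u] = ((k.+1)%:R^-1)%:E) ->
  rfin tau -> (forall s, P1 [set w | tau w = s] = (((k.+1)`!)%:R^-1)%:E) ->
  (* G, U, tau independent *)
  (forall (f : 'rV[R]_k -> R) (g : 'I_k.+1 -> R) (h : {perm 'I_k.+1} -> R),
     bcont f ->
     Exp P1 (fun w => f (G w) * g (U w) * h (tau w))
     = Exp P1 (fun w => f (G w)) * Exp P1 (fun w => g (U w))
       * Exp P1 (fun w => h (tau w))) ->
  (* conclusion: (Gbar_{tau(i)} - Gbar_U)_i  =(d)  J = (I_i - I_{U'})_i *)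
  forall f : 'rV[R]_k.+1 -> R, bcont f ->
    Exp P1 (fun w => f (\row_i (Gbar (G w) (tau w i) - Gbar (G w) (U w))))
    = Exp P2 (fun w => f (\row_i (I w ord0 i - I w ord0 (U' w)))).
Proof.
move=> HBM mI HI mU' HU' ind2 mG HG mU HU mtau Htau ind1 f fb.
set a := ((k.+1)%:R^-1 : R).
set b := (((k.+1)`!)%:R^-1 : R).
pose A (u : 'I_k.+1) (s : {perm 'I_k.+1}) (g : 'rV[R]_k) :=
  f (\row_i (Gbar g (s i) - Gbar g u)).
pose C (v : 'I_k.+1) (y : 'rV[R]_k.+1) := f (\row_i (y ord0 i - y ord0 v)).
have fbA u s : bcont (A u s).
  apply: (@bcont_comp R _ _ f (fun g : 'rV[R]_k => \row_i (Gbar g (s i) - Gbar g u))) => // j.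
  by under eq_fun do rewrite mxE; exact: cont_GbarB.
have fbC v : bcont (C v).
  apply: (@bcont_comp R _ _ f (fun y : 'rV[R]_k.+1 => \row_i (y ord0 i - y ord0 v))) => // j.
  by under eq_fun do rewrite mxE; exact: cont_coordB.
have fbCr v (r : {perm 'I_k.+1}) : bcont (fun y => C v (pr r y)).
  apply: (@bcont_comp R _ _ f (fun y : 'rV[R]_k.+1 => \row_i (pr r y ord0 i - pr r y ord0 v))) => // j.
  by under eq_fun do rewrite !mxE; exact: cont_coordB.
have LHS : Exp P1 (fun w => f (\row_i (Gbar (G w) (tau w i) - Gbar (G w) (U w)))) =
    \sum_(u : 'I_k.+1) \sum_(s : {perm 'I_k.+1})
       (Exp P2 (fun w => A u s (gaps (I w))) * a * b).
  transitivity (Exp P1 (fun w => \sum_(u : 'I_k.+1) \sum_(s : {perm 'I_k.+1})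
      A u s (G w) * (U w == u)%:R * (tau w == s)%:R)).
    congr Exp; apply/funext => w.
    under eq_bigr do rewrite sum_ind.
    by rewrite sum_ind.
  rewrite Exp_sum; last first.
    move=> u; apply: bm_sum => s; apply: bm_mul; last exact: bm_indic.
    by apply: bm_mul; [exact: bm_comp | exact: bm_indic].
  apply: eq_bigr => u _; rewrite Exp_sum; last first.
    move=> s; apply: bm_mul; last exact: bm_indic.
    by apply: bm_mul; [exact: bm_comp | exact: bm_indic].
  apply: eq_bigr => s _.
  rewrite (ind1 (A u s) (fun u' => (u' == u)%:R) (fun s' => (s' == s)%:R) (fbA u s)) /=.
  by rewrite (HG _ (fbA u s)) !Exp_indic // HU Htau.
have RHS : Exp P2 (fun w => f (\row_i (I w ord0 i - I w ord0 (U' w)))) =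
    \sum_(v : 'I_k.+1) (b * \sum_(r : {perm 'I_k.+1})
       Exp P2 (fun w => C v (pr r (I w)))) * a.
  transitivity (Exp P2 (fun w => \sum_(v : 'I_k.+1) C v (I w) * (U' w == v)%:R)).
    by congr Exp; apply/funext => w; rewrite sum_ind.
  rewrite Exp_sum; last first.
    by move=> v; apply: bm_mul; [exact: bm_comp | exact: bm_indic].
  apply: eq_bigr => v _.
  rewrite (ind2 (C v) (fun v' => (v' == v)%:R) (fbC v)) /= Exp_indic // HU' /=.
  congr (_ * _).
  under eq_bigr do rewrite -(@exch R _ _ _ _ _ _ _ _ _ HI (C v) _ (fbC v)).
  rewrite sumr_const card_Sn -mulr_natr mulrCA mulVf ?mulr1 //.
have key : \sum_(u : 'I_k.+1) \sum_(s : {perm 'I_k.+1})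
      Exp P2 (fun w => A u s (gaps (I w))) =
    \sum_(v : 'I_k.+1) \sum_(r : {perm 'I_k.+1})
      Exp P2 (fun w => C v (pr r (I w))).
  have E1 : Exp P2 (fun w => \sum_(u : 'I_k.+1) \sum_(s : {perm 'I_k.+1})
      A u s (gaps (I w))) = \sum_(u : 'I_k.+1) \sum_(s : {perm 'I_k.+1})
      Exp P2 (fun w => A u s (gaps (I w))).
    rewrite Exp_sum; last by move=> u; apply: bm_sum => s; exact: bm_gaps.
    by apply: eq_bigr => u _; rewrite Exp_sum // => s; exact: bm_gaps.
  have E2 : Exp P2 (fun w => \sum_(v : 'I_k.+1) \sum_(r : {perm 'I_k.+1})
      C v (pr r (I w))) = \sum_(v : 'I_k.+1) \sum_(r : {perm 'I_k.+1})
      Exp P2 (fun w => C v (pr r (I w))).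
    rewrite Exp_sum; last by move=> v; apply: bm_sum => r; exact: (@bm_comp R _ _ _ I _ mI (fbCr v r)).
    by apply: eq_bigr => v _; rewrite Exp_sum // => r; exact: (@bm_comp R _ _ _ I _ mI (fbCr v r)).
  rewrite -E1 -E2; congr Exp; apply/funext => w; exact: sum_ident.
rewrite LHS RHS.
transitivity ((\sum_(u : 'I_k.+1) \sum_(s : {perm 'I_k.+1})
       Exp P2 (fun w => A u s (gaps (I w)))) * (a * b)).
  rewrite big_distrl; apply: eq_bigr => u _; rewrite big_distrl.
  by apply: eq_bigr => s _; rewrite /= mulrA.
rewrite key big_distrl; apply: eq_bigr => v _.
by rewrite [b * _]mulrC -mulrA [b * a]mulrC.
Qed.
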